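(* Let $\Omega$ be a set endowed with a well-order $\le^*$, and let a group $G$ act faithfully on $\Omega$ preserving a total order $\le$ on $\Omega$. Then there exists a left-ordering of $G$ for which the pointwise stabilizer $G_{\Omega_0}$ of every initial segment $\Omega_0$ of $(\Omega,\le^* )$ is convex. Moreover, if the action has no crossings, this left-ordering is Conradian.
   Context: A left-ordering is a total order on $G$ invariant under left multiplication; a subgroup $H$ is convex if $f_1\prec h\prec f_2$ with $f_1,f_2\in H$ implies $h\in H$; a left-ordering is Conradian if for all $f\succ id$, $g\succ id$ there is $n\in\mathbb{N}$ with $fg^n\succ g$. A crossing for the action on $(\Omega,\le)$ is a 5-tuple $(f,g,u,v,w)$, $f,g\in G$, $u,v,w\in\Omega$, with $u<w<v$; $g^nu<v$ and $f^nv>u$ for all $n\in\mathbb{N}$; and $f^Nv<w<g^Mu$ for some $M,N\in\mathbb{N}$. *)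

(* Defs.v *)
Set Implicit Arguments.

Record Group := {
  carrier :> Type;
  gmul : carrier -> carrier -> carrier;
  gid : carrier;
  ginv : carrier -> carrier;
  gmul_assoc : forall a b c, gmul a (gmul b c) = gmul (gmul a b) c;
  gid_l : forall a, gmul gid a = a;
  gid_r : forall a, gmul a gid = a;
  ginv_l : forall a, gmul (ginv a) a = gid;
  ginv_r : forall a, gmul a (ginv a) = gid
}.

Arguments gmul {G} : rename.
Arguments gid {G} : rename.
Arguments ginv {G} : rename.

Fixpoint gpow {G : Group} (g : G) (n : nat) : G :=
  match n with O => gid | S k => gmul g (gpow g k) end.

Definition total_order {T : Type} (le : T -> T -> Prop) : Prop :=
  (forall x, le x x) /\
  (forall x y, le x y -> le y x -> x = y) /\
  (forall x y z, le x y -> le y z -> le x z) /\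
  (forall x y, le x y \/ le y x).

Definition well_order {T : Type} (le : T -> T -> Prop) : Prop :=
  total_order le /\
  (forall P : T -> Prop, (exists x, P x) ->
     exists m, P m /\ forall x, P x -> le m x).

Definition is_action (G : Group) (Omega : Type) (act : G -> Omega -> Omega) : Prop :=
  (forall x, act gid x = x) /\
  (forall g h x, act (gmul g h) x = act g (act h x)).

Definition faithful (G : Group) (Omega : Type) (act : G -> Omega -> Omega) : Prop :=
  forall g, (forall x, act g x = x) -> g = gid.

Definition order_preserving (G : Group) (Omega : Type) (act : G -> Omega -> Omega)
  (le : Omega -> Omega -> Prop) : Prop :=
  forall g x y, le x y -> le (act g x) (act g y).

Definition left_ordering (G : Group) (prec : G -> G -> Prop) : Prop :=
  (forall f, ~ prec f f) /\
  (forall f g h, prec f g -> prec g h -> prec f h) /\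
  (forall f g, prec f g \/ f = g \/ prec g f) /\
  (forall f g h, prec f g -> prec (gmul h f) (gmul h g)).

Definition convex (G : Group) (prec : G -> G -> Prop) (H : G -> Prop) : Prop :=
  forall f1 h f2, H f1 -> H f2 -> prec f1 h -> prec h f2 -> H h.

Definition conradian (G : Group) (prec : G -> G -> Prop) : Prop :=
  forall f g, prec gid f -> prec gid g ->
    exists n : nat, 1 <= n /\ prec g (gmul f (gpow g n)).

Definition initial_segment {Omega : Type} (le_star : Omega -> Omega -> Prop)
  (O0 : Omega -> Prop) : Prop :=
  forall x y, O0 y -> le_star x y -> O0 x.

Definition pointwise_stabilizer (G : Group) (Omega : Type)
  (act : G -> Omega -> Omega) (O0 : Omega -> Prop) : G -> Prop :=
  fun g => forall x, O0 x -> act g x = x.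

Definition crossing (G : Group) (Omega : Type) (act : G -> Omega -> Omega)
  (le : Omega -> Omega -> Prop) (f g : G) (u v w : Omega) : Prop :=
  let lt := fun a b => le a b /\ a <> b in
  lt u w /\ lt w v /\
  (forall n : nat, lt (act (gpow g n) u) v /\ lt u (act (gpow f n) v)) /\
  (exists M N : nat, lt (act (gpow f N) v) w /\ lt w (act (gpow g M) u)).

Definition no_crossings (G : Group) (Omega : Type) (act : G -> Omega -> Omega)
  (le : Omega -> Omega -> Prop) : Prop :=
  forall f g u v w, ~ @crossing G Omega act le f g u v w.

(* Main.v *)
Require Import Defs.
From Stdlib Require Import Classical Lia.

Section S.
Variable G : Group.
Variable Omega : Type.
Variables le_star le : Omega -> Omega -> Prop.
Variable act : G -> Omega -> Omega.
Hypothesis Hws : well_order le_star.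
Hypothesis Hto : total_order le.
Hypothesis Hact : @is_action G Omega act.
Hypothesis Hfa : @faithful G Omega act.
Hypothesis Hop : @order_preserving G Omega act le.

Definition lt a b := le a b /\ a <> b.
Definition slt a b := le_star a b /\ a <> b.
Definition lmp (k:G) m := act k m <> m /\ forall y, slt y m -> act k y = y.
Definition pos (k:G) := exists m, lmp k m /\ lt m (act k m).

Lemma inv_unique (a b : G) : gmul a b = gid -> b = ginv a.
Proof.
  intro H. rewrite <- (gid_l G b), <- (ginv_l G a), <- gmul_assoc, H, gid_r. reflexivity.
Qed.

Lemma ginv_mul (a b : G) : ginv (gmul a b) = gmul (ginv b) (ginv a).
Proof.
  symmetry. apply inv_unique.
  rewrite <- gmul_assoc, (gmul_assoc _ b), ginv_r, gid_l, ginv_r. reflexivity.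
Qed.

Lemma ginv_ginv (a : G) : ginv (ginv a) = a.
Proof. symmetry. apply inv_unique. apply ginv_l. Qed.

Lemma ginv_gid : ginv (@gid G) = gid.
Proof. symmetry. apply inv_unique. apply gid_l. Qed.

Lemma cancel_mid (f g h : G) : gmul (gmul (ginv f) g) (gmul (ginv g) h) = gmul (ginv f) h.
Proof. rewrite <- gmul_assoc, (gmul_assoc _ g), ginv_r, gid_l. reflexivity. Qed.

Lemma act_id x : act gid x = x.
Proof. destruct Hact as [H _]; auto. Qed.
Lemma act_mul g h x : act (gmul g h) x = act g (act h x).
Proof. destruct Hact as [_ H]; auto. Qed.
Lemma act_inv_l g x : act (ginv g) (act g x) = x.
Proof. rewrite <- act_mul, ginv_l, act_id; auto. Qed.
Lemma act_inv_r g x : act g (act (ginv g) x) = x.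
Proof. rewrite <- act_mul, ginv_r, act_id; auto. Qed.
Lemma act_inj g x y : act g x = act g y -> x = y.
Proof. intro H. rewrite <- (act_inv_l g x), H, act_inv_l. auto. Qed.

Lemma le_refl x : le x x. Proof. destruct Hto as [H _]; auto. Qed.
Lemma le_anti x y : le x y -> le y x -> x = y. Proof. destruct Hto as [_ [H _]]; auto. Qed.
Lemma le_trans x y z : le x y -> le y z -> le x z. Proof. destruct Hto as [_ [_ [H _]]]; eauto. Qed.
Lemma le_tot x y : le x y \/ le y x. Proof. destruct Hto as [_ [_ [_ H]]]; auto. Qed.

Lemma lt_act g x y : lt x y -> lt (act g x) (act g y).
Proof. intros [H1 H2]. split. apply Hop; auto. intro E. apply H2. eapply act_inj; eauto. Qed.
Lemma lt_trans x y z : lt x y -> lt y z -> lt x z.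
Proof.
  intros [H1 H2] [H3 H4]. split. eapply le_trans; eauto.
  intro E; subst. apply H2. apply le_anti; auto.
Qed.
Lemma lt_le_trans x y z : lt x y -> le y z -> lt x z.
Proof.
  intros [H1 H2] H3. split. eapply le_trans; eauto.
  intro E; subst. apply H2. apply le_anti; auto.
Qed.
Lemma le_lt_trans x y z : le x y -> lt y z -> lt x z.
Proof.
  intros H1 [H3 H2]. split. eapply le_trans; eauto.
  intro E; subst. apply H2. apply le_anti; auto.
Qed.

Lemma ls_refl x : le_star x x. Proof. destruct Hws as [[H _] _]; auto. Qed.
Lemma ls_anti x y : le_star x y -> le_star y x -> x = y. Proof. destruct Hws as [[_ [H _]] _]; auto. Qed.
Lemma ls_trans x y z : le_star x y -> le_star y z -> le_star x z. Proof. destruct Hws as [[_ [_ [H _]]] _]; eauto. Qed.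
Lemma ls_tot x y : le_star x y \/ le_star y x. Proof. destruct Hws as [[_ [_ [_ H]]] _]; auto. Qed.

Lemma slt_le_trans x y z : slt x y -> le_star y z -> slt x z.
Proof.
  intros [H1 H2] H3. split. eapply ls_trans; eauto.
  intro E; subst. apply H2. apply ls_anti; auto.
Qed.
Lemma slt_trans x y z : slt x y -> slt y z -> slt x z.
Proof. intros H1 [H2 _]. eapply slt_le_trans; eauto. Qed.

Lemma lmp_exists k : k <> gid -> exists m, lmp k m.
Proof.
  intro Hk.
  assert (exists x, act k x <> x) as Hex.
  { apply NNPP; intro Hn. apply Hk. apply Hfa. intro x. apply NNPP; intro Hx.
    apply Hn. exists x; auto. }
  destruct Hws as [_ Hmin].
  destruct (Hmin (fun x => act k x <> x) Hex) as [m [Hm1 Hm2]].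
  exists m. split; auto. intros y [Hy1 Hy2]. apply NNPP; intro Hy.
  apply Hy2. apply ls_anti; auto.
Qed.

Lemma lmp_below k m x : lmp k m -> act k x <> x -> le_star m x.
Proof.
  intros [H1 H2] Hx. destruct (ls_tot m x); auto.
  destruct (classic (x = m)) as [e|ne]. subst; apply ls_refl.
  exfalso. apply Hx. apply H2. split; auto.
Qed.

Lemma lmp_unique k m1 m2 : lmp k m1 -> lmp k m2 -> m1 = m2.
Proof.
  intros H1 H2. apply ls_anti; eapply lmp_below; eauto.
  destruct H2; auto. destruct H1; auto.
Qed.

Lemma lmp_inv k m : lmp k m -> lmp (ginv k) m.
Proof.
  intros [H1 H2]. split.
  - intro E. apply H1. rewrite <- E at 1. apply act_inv_r.
  - intros y Hy. rewrite <- (H2 y Hy) at 1. apply act_inv_l.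
Qed.

Lemma pos_gid : ~ pos gid.
Proof. intros [m [[H _] _]]. apply H. apply act_id. Qed.

Lemma pos_tot k : k <> gid -> pos k \/ pos (ginv k).
Proof.
  intro Hk. destruct (lmp_exists k Hk) as [m Hm].
  destruct (le_tot m (act k m)) as [H|H].
  - left. exists m. split; auto. split; auto. intro E. apply (proj1 Hm). auto.
  - right. exists m. split. apply lmp_inv; auto.
    assert (lt (act k m) m) as H2. { split; auto. apply (proj1 Hm). }
    apply (lt_act (ginv k)) in H2. rewrite act_inv_l in H2. exact H2.
Qed.

Lemma pos_mul h k a b : lmp h a -> lt a (act h a) -> lmp k b -> lt b (act k b) ->
  exists m, (m = a \/ m = b) /\ lmp (gmul h k) m /\ lt m (act (gmul h k) m).
Proof.
  intros [Ha1 Ha2] Ha3 [Hb1 Hb2] Hb3.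
  assert (Hcase : a = b \/ slt a b \/ slt b a).
  { destruct (classic (a = b)) as [e|ne]; auto.
    destruct (ls_tot a b); [right; left | right; right]; split; auto. }
  destruct Hcase as [e|[Hs|Hs]].
  - subst b. exists a. assert (lt a (act (gmul h k) a)) as L.
    { rewrite act_mul. eapply lt_trans. exact Ha3. apply lt_act. auto. }
    split; auto. split; auto. split. intro E. destruct L as [_ L]. auto.
    intros y Hy. rewrite act_mul, Hb2, Ha2; auto.
  - exists a. assert (act k a = a) as Ka by (apply Hb2; auto).
    assert (lt a (act (gmul h k) a)) as L by (rewrite act_mul, Ka; auto).
    split; auto. split; auto. split. intro E. destruct L as [_ L]. auto.
    intros y Hy. rewrite act_mul, Hb2, Ha2; auto. eapply slt_trans; eauto.
  - exists b. assert (act h b = b) as Hb by (apply Ha2; auto).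
    assert (lt b (act (gmul h k) b)) as L.
    { rewrite act_mul. apply (lt_act h) in Hb3. rewrite Hb in Hb3. auto. }
    split; auto. split; auto. split. intro E. destruct L as [_ L]. auto.
    intros y Hy. rewrite act_mul, Hb2, Ha2; auto. eapply slt_trans; eauto.
Qed.

Lemma gpow_fix g n y : act g y = y -> act (gpow g n) y = y.
Proof.
  intro H. induction n; simpl. apply act_id. rewrite act_mul, IHn. auto.
Qed.

Lemma gpow_S_r (g : G) n : gpow g (S n) = gmul (gpow g n) g.
Proof.
  induction n. simpl. rewrite gid_r, gid_l. auto.
  change (gpow g (S (S n))) with (gmul g (gpow g (S n))). rewrite IHn at 1.
  rewrite gmul_assoc. reflexivity.
Qed.

Lemma gpow_le f q : le q (act f q) -> forall j, le q (act (gpow f j) q).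
Proof.
  intros H j. induction j; simpl. rewrite act_id. apply le_refl.
  rewrite act_mul. eapply le_trans. exact H. apply Hop. auto.
Qed.

Lemma conj_pos f g m n : (forall y, slt y m -> act f y = y /\ act g y = y) ->
  lt (act g m) (act f (act (gpow g n) m)) -> pos (gmul (ginv g) (gmul f (gpow g n))).
Proof.
  intros Hfix Hl. exists m.
  assert (lt m (act (gmul (ginv g) (gmul f (gpow g n))) m)) as L.
  { rewrite !act_mul. apply (lt_act (ginv g)) in Hl. rewrite act_inv_l in Hl. auto. }
  split; auto. split. intro E. destruct L as [_ L]. auto.
  intros y Hy. destruct (Hfix y Hy) as [F1 F2].
  rewrite !act_mul, gpow_fix, F1; auto.
  rewrite <- F2 at 1. apply act_inv_l.
Qed.

Lemma main_sec : exists prec : G -> G -> Prop,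
    @left_ordering G prec /\
    (forall O0 : Omega -> Prop, initial_segment le_star O0 ->
       @convex G prec (@pointwise_stabilizer G Omega act O0)) /\
    (@no_crossings G Omega act le -> @conradian G prec).
Proof.
  pose (P := pos).
  exists (fun f g => P (gmul (ginv f) g)).
  split; [|split].
  - split; [|split; [|split]].
    + intros f. rewrite ginv_l. apply pos_gid.
    + intros f g h H1 H2. destruct H1 as [a [Ha1 Ha2]]. destruct H2 as [b [Hb1 Hb2]].
      destruct (pos_mul _ _ _ _ Ha1 Ha2 Hb1 Hb2) as [m [_ [Hm1 Hm2]]].
      rewrite cancel_mid in Hm1, Hm2. exists m; auto.
    + intros f g. destruct (classic (f = g)) as [e|ne]; auto.
      assert (gmul (ginv f) g <> gid) as Hn.
      { intro E. apply ne. apply inv_unique in E. rewrite ginv_ginv in E. auto. }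
      destruct (pos_tot _ Hn) as [H|H]; auto.
      rewrite ginv_mul, ginv_ginv in H. auto.
    + intros f g h H. rewrite ginv_mul, <- gmul_assoc, (gmul_assoc _ (ginv h)), ginv_l, gid_l. auto.
  - intros O0 HO f1 h f2 H1 H2 p1 p2. apply NNPP; intro Hn.
    apply not_all_ex_not in Hn. destruct Hn as [x Hx].
    apply imply_to_and in Hx. destruct Hx as [Ox Hx].
    destruct p1 as [m1 [Hm1 Hm1']]. destruct p2 as [m2 [Hm2 Hm2']].
    assert (act (ginv f1) x = x) as F1.
    { rewrite <- (H1 x Ox) at 1. apply act_inv_l; auto. }
    assert (O0 m1) as O1.
    { apply (HO m1 x Ox). eapply lmp_below; eauto.
      rewrite act_mul. intro E. apply Hx.
      apply (act_inj (ginv f1)). rewrite E. symmetry. exact F1. }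
    assert (O0 m2) as O2.
    { apply (HO m2 x Ox). eapply lmp_below; eauto.
      rewrite act_mul, (H2 x Ox). intro E. apply Hx.
      rewrite <- E at 1. apply act_inv_r. }
    destruct (pos_mul _ _ _ _ Hm1 Hm1' Hm2 Hm2') as [m [Hm [[Hm3 _] _]]].
    rewrite cancel_mid in Hm3. apply Hm3.
    assert (O0 m) as Om by (destruct Hm; subst; auto).
    rewrite act_mul, (H2 m Om); auto. rewrite <- (H1 m Om) at 1. apply act_inv_l; auto.
  - intros Hnc f g pf pg. unfold P in pf, pg. rewrite ginv_gid, gid_l in pf, pg.
    destruct pf as [p [[Hp1 Hp2] Hp3]]. destruct pg as [q [[Hq1 Hq2] Hq3]].
    assert (CA : le_star q p -> exists n, 1 <= n /\ P (gmul (ginv g) (gmul f (gpow g n)))).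
    { intro Hqp.
      assert (Hfix : forall y, slt y q -> act f y = y /\ act g y = y).
      { intros y Hy. split; auto. apply Hp2. eapply slt_le_trans; eauto. }
      assert (Hfq : le q (act f q)).
      { destruct (classic (q = p)) as [e|ne]. subst. destruct Hp3; auto.
        rewrite Hp2. apply le_refl; auto. split; auto. }
      assert (Hex : exists n, 1 <= n /\ lt (act g q) (act f (act (gpow g n) q))).
      { apply NNPP; intro H.
        assert (Hle : forall n, 1 <= n -> le (act f (act (gpow g n) q)) (act g q)).
        { intros n Hn. destruct (le_tot (act f (act (gpow g n) q)) (act g q)) as [L|L]; auto.
          destruct (classic (act g q = act f (act (gpow g n) q))) as [e|ne].
          rewrite e. apply le_refl; auto.
          exfalso. apply H. exists n. split; auto. split; auto. }
        assert (Hinc : forall n, lt (act (gpow g n) q) (act (gpow g (S n)) q)).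
        { intro n. rewrite gpow_S_r, act_mul; auto. apply lt_act; auto. }
        assert (A0 : act (gpow g 0) q = q) by (simpl; apply act_id; auto).
        assert (A1 : act (gpow g 1) q = act g q) by (simpl; rewrite gid_r; auto).
        assert (Hall : forall n, lt (act f (act (gpow g n) q)) (act g q)).
        { intros [|n].
          - rewrite A0. apply lt_le_trans with (y := act f (act g q)). apply lt_act; exact Hq3.
            pose proof (Hle 1 (le_n 1)) as H1'. rewrite A1 in H1'. exact H1'.
          - split. apply Hle. lia. intro E.
            assert (L := lt_act f _ _ (Hinc (S n))).
            rewrite E in L. destruct L as [L1 L2]. apply L2. apply le_anti; auto.
            apply Hle. lia. }
        set (v := act (ginv f) (act g q)).
        assert (Hv : forall j, lt (act (gpow g j) q) v).
        { intro j. assert (L := lt_act (ginv f) _ _ (Hall j)).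
          rewrite act_inv_l in L; auto. }
        apply (Hnc f g q v (act (gpow g 2) q)). unfold crossing.
        split; [|split; [|split]].
        + apply lt_trans with (y := act (gpow g 1) q).
          pose proof (Hinc 0) as I0. rewrite A0 in I0. exact I0. apply Hinc.
        + apply Hv.
        + intro j. split. apply Hv.
          apply le_lt_trans with (y := act (gpow f j) q). apply gpow_le; auto. apply lt_act.
          pose proof (Hv 0) as V0. rewrite A0 in V0. exact V0.
        + exists 3, 1. split.
          * simpl. rewrite gid_r. unfold v. rewrite act_inv_r; auto. rewrite <- A1. apply Hinc.
          * apply Hinc. }
      destruct Hex as [n [Hn L]]. exists n. split; auto.
      eapply conj_pos; eauto. }
    destruct (ls_tot p q) as [Hpq|Hqp]; auto.
    destruct (classic (p = q)) as [e|ne]. subst. apply CA. apply ls_refl; auto.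
    exists 1. split; auto. apply conj_pos with (m := p); auto.
    + intros y Hy. split; auto. apply Hq2. eapply slt_trans; eauto. split; auto.
    + simpl. rewrite gid_r. assert (act g p = p) as Gp by (apply Hq2; split; auto). rewrite Gp. exact Hp3.
Qed.

End S.

Theorem mainTheorem18 (G : Group) (Omega : Type)
  (le_star : Omega -> Omega -> Prop) (le : Omega -> Omega -> Prop)
  (act : G -> Omega -> Omega) :
  well_order le_star ->
  total_order le ->
  @is_action G Omega act ->
  @faithful G Omega act ->
  @order_preserving G Omega act le ->
  exists prec : G -> G -> Prop,
    @left_ordering G prec /\
    (forall O0 : Omega -> Prop, initial_segment le_star O0 ->
       @convex G prec (@pointwise_stabilizer G Omega act O0)) /\
    (@no_crossings G Omega act le -> @conradian G prec).
Proof.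
  intros. apply main_sec; auto.
Qed.
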